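(* In the While-language extended with non-deterministic input, for every command $c$ and store $\sigma$: $(c,\sigma)\to^\infty$ if and only if for every store $\sigma'$, $(c,\sigma,\Downarrow)\Rightarrow^{co}_G\sigma',\Uparrow$.
   Context: Extended While-language syntax: variables $x$ range over a countably infinite set $\mathit{Var}$; $n$ ranges over natural numbers; values are $v ::= \mathsf{null}\mid n$ ($\mathsf{null}$ distinct from every natural number); expressions are $e ::= v\mid x\mid e_1\oplus e_2\mid\mathsf{input}$ with $\oplus\in\{+,-,*\}$, where $\oplus(n_1,n_2)$ is the result of the operation on naturals; commands are $c ::= \mathsf{skip}\mid\mathsf{alloc}\ x\mid x:=e\mid c_1;c_2\mid \mathsf{if}\ e\ c_1\ c_2\mid\mathsf{while}\ e\ c$. A store $\sigma$ is a finite partial map from $\mathit{Var}$ to values, with domain $\mathrm{dom}(\sigma)$, lookup $\sigma(x)$, update $\sigma[x\mapsto v]$. Expression evaluation $(e,\sigma)\Rightarrow_E v$ is the least relation with: $(v,\sigma)\Rightarrow_E v$; $(x,\sigma)\Rightarrow_E\sigma(x)$ if $x\in\mathrm{dom}(\sigma)$; if $(e_1,\sigma)\Rightarrow_E n_1$ and $(e_2,\sigma)\Rightarrow_E n_2$ with $n_1,n_2$ naturals then $(e_1\oplus e_2,\sigma)\Rightarrow_E\oplus(n_1,n_2)$; and $(\mathsf{input},\sigma)\Rightarrow_E v$ for every value $v$. Small-step relation $(c,\sigma)\to(c',\sigma')$ is the least relation with: $(\mathsf{alloc}\ x,\sigma)\to(\mathsf{skip},\sigma[x\mapsto\mathsf{null}])$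 if $x\notin\mathrm{dom}(\sigma)$; $(x:=e,\sigma)\to(\mathsf{skip},\sigma[x\mapsto v])$ if $x\in\mathrm{dom}(\sigma)$ and $(e,\sigma)\Rightarrow_E v$; $(c_1;c_2,\sigma)\to(c_1';c_2,\sigma')$ if $(c_1,\sigma)\to(c_1',\sigma')$; $(\mathsf{skip};c_2,\sigma)\to(c_2,\sigma)$; $(\mathsf{if}\ e\ c_1\ c_2,\sigma)\to(c_1,\sigma)$ if $(e,\sigma)\Rightarrow_E v$, $v\neq 0$; $(\mathsf{if}\ e\ c_1\ c_2,\sigma)\to(c_2,\sigma)$ if $(e,\sigma)\Rightarrow_E 0$; $(\mathsf{while}\ e\ c,\sigma)\to(c;\mathsf{while}\ e\ c,\sigma)$ if $(e,\sigma)\Rightarrow_E v$, $v\neq0$; $(\mathsf{while}\ e\ c,\sigma)\to(\mathsf{skip},\sigma)$ if $(e,\sigma)\Rightarrow_E 0$. The predicate $(c,\sigma)\to^\infty$ is coinductively defined (greatest predicate) by: if $(c,\sigma)\to(c',\sigma')$ and $(c',\sigma')\to^\infty$ then $(c,\sigma)\to^\infty$. Flag-based big-step semantics: status flags $\delta ::= \Downarrow\mid\Uparrow$. Expression evaluation $(e,\sigma,\delta)\Rightarrow_{GE}v,\delta'$ is the least relation with: $(v,\sigma,\Downarrow)\Rightarrow_{GE}v,\Downarrow$; $(x,\sigma,\Downarrow)\Rightarrow_{GE}\sigma(x),\Downarrow$ if $x\in\mathrm{dom}(\sigma)$; if $(e_1,\sigma,\Downarrow)\Rightarrow_{GE}n_1,\delta$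 and $(e_2,\sigma,\delta)\Rightarrow_{GE}n_2,\delta'$ ($n_1,n_2$ naturals) then $(e_1\oplus e_2,\sigma,\Downarrow)\Rightarrow_{GE}\oplus(n_1,n_2),\delta'$; $(\mathsf{input},\sigma,\Downarrow)\Rightarrow_{GE}v,\Downarrow$ for every value $v$; and $(e,\sigma,\Uparrow)\Rightarrow_{GE}v,\Uparrow$ for every value $v$. The command rules for judgments $(c,\sigma,\delta)\Rightarrow_G\sigma',\delta'$ are: $(\mathsf{skip},\sigma,\Downarrow)\Rightarrow_G\sigma,\Downarrow$; $(\mathsf{alloc}\ x,\sigma,\Downarrow)\Rightarrow_G\sigma[x\mapsto\mathsf{null}],\Downarrow$ if $x\notin\mathrm{dom}(\sigma)$; $(x:=e,\sigma,\Downarrow)\Rightarrow_G\sigma[x\mapsto v],\delta$ if $x\in\mathrm{dom}(\sigma)$ and $(e,\sigma,\Downarrow)\Rightarrow_{GE}v,\delta$; $(c_1;c_2,\sigma,\Downarrow)\Rightarrow_G\sigma'',\delta'$ if $(c_1,\sigma,\Downarrow)\Rightarrow_G\sigma',\delta$ and $(c_2,\sigma',\delta)\Rightarrow_G\sigma'',\delta'$; $(\mathsf{if}\ e\ c_1\ c_2,\sigma,\Downarrow)\Rightarrow_G\sigma',\delta'$ if $v\ne0$, $(e,\sigma,\Downarrow)\Rightarrow_{GE}v,\delta$ and $(c_1,\sigma,\delta)\Rightarrow_G\sigma',\delta'$; $(\mathsf{if}\ e\ c_1\ c_2,\sigma,\Downarrow)\Rightarrow_G\sigma',\delta'$ if $(e,\sigma,\Downarrow)\Rightarrow_{GE}0,\delta$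 and $(c_2,\sigma,\delta)\Rightarrow_G\sigma',\delta'$; $(\mathsf{while}\ e\ c,\sigma,\Downarrow)\Rightarrow_G\sigma'',\delta''$ if $(e,\sigma,\Downarrow)\Rightarrow_{GE}v,\delta$, $v\ne0$, $(c,\sigma,\delta)\Rightarrow_G\sigma',\delta'$ and $(\mathsf{while}\ e\ c,\sigma',\delta')\Rightarrow_G\sigma'',\delta''$; $(\mathsf{while}\ e\ c,\sigma,\Downarrow)\Rightarrow_G\sigma,\delta$ if $(e,\sigma,\Downarrow)\Rightarrow_{GE}0,\delta$; $(c,\sigma,\Uparrow)\Rightarrow_G\sigma',\Uparrow$ for every store $\sigma'$. $\Rightarrow^{co}_G$ is the coinductive interpretation of these command rules (greatest relation such that every element is the conclusion of a rule instance whose command premises lie in it). *)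

(* Defs.v *)
From HB Require Import structures.
From mathcomp Require Import all_boot.
From mathcomp Require Import finmap.

Set Implicit Arguments.
Unset Strict Implicit.
Unset Printing Implicit Defensive.

Local Open Scope fmap_scope.

Definition var := nat.

Inductive value : Type := VNull | VNat (n : nat).

Definition value_to_opt (v : value) : option nat :=
  match v with VNull => None | VNat n => Some n end.
Definition opt_to_value (o : option nat) : value :=
  match o with None => VNull | Some n => VNat n end.
Lemma value_optK : cancel value_to_opt opt_to_value.
Proof. by case. Qed.
HB.instance Definition _ := Countable.copy value (can_type value_optK).

(** Binary operators on naturals: +, - (truncated), *. *)
Inductive binop : Type := OPlus | OMinus | OMult.

Definition eval_op (o : binop) (n1 n2 : nat) : nat :=
  match o with
  | OPlus => n1 + n2
  | OMinus => n1 - n2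
  | OMult => n1 * n2
  end.

Inductive expr : Type :=
  | EVal (v : value)
  | EVar (x : var)
  | EOp (o : binop) (e1 e2 : expr)
  | EInput.

Inductive cmd : Type :=
  | CSkip
  | CAlloc (x : var)
  | CAssign (x : var) (e : expr)
  | CSeq (c1 c2 : cmd)
  | CIf (e : expr) (c1 c2 : cmd)
  | CWhile (e : expr) (c : cmd).

Definition store := {fmap var -> value}.

Inductive eval_expr : expr -> store -> value -> Prop :=
  | EE_val v s : eval_expr (EVal v) s v
  | EE_var x s (Hx : x \in domf s) : eval_expr (EVar x) s (s.[Hx])
  | EE_op o e1 e2 s n1 n2 :
      eval_expr e1 s (VNat n1) -> eval_expr e2 s (VNat n2) ->
      eval_expr (EOp o e1 e2) s (VNat (eval_op o n1 n2))
  | EE_input s v : eval_expr EInput s v.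

Inductive step : cmd -> store -> cmd -> store -> Prop :=
  | S_alloc x s : x \notin domf s -> step (CAlloc x) s CSkip s.[x <- VNull]
  | S_assign x e s v : x \in domf s -> eval_expr e s v ->
      step (CAssign x e) s CSkip s.[x <- v]
  | S_seq c1 c1' c2 s s' : step c1 s c1' s' -> step (CSeq c1 c2) s (CSeq c1' c2) s'
  | S_seq_skip c2 s : step (CSeq CSkip c2) s c2 s
  | S_if_true e c1 c2 s v : eval_expr e s v -> v <> VNat 0 -> step (CIf e c1 c2) s c1 s
  | S_if_false e c1 c2 s : eval_expr e s (VNat 0) -> step (CIf e c1 c2) s c2 s
  | S_while_true e c s v : eval_expr e s v -> v <> VNat 0 ->
      step (CWhile e c) s (CSeq c (CWhile e c)) s
  | S_while_false e c s : eval_expr e s (VNat 0) -> step (CWhile e c) s CSkip s.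

CoInductive diverges : cmd -> store -> Prop :=
  | Div c s c' s' : step c s c' s' -> diverges c' s' -> diverges c s.

(** Status flags: Conv = ⇓ (normal), Div = ⇑ (diverged). *)
Inductive flag : Type := FConv | FDiv.

Inductive geval_expr : expr -> store -> flag -> value -> flag -> Prop :=
  | GE_val v s : geval_expr (EVal v) s FConv v FConv
  | GE_var x s (Hx : x \in domf s) : geval_expr (EVar x) s FConv (s.[Hx]) FConv
  | GE_op o e1 e2 s n1 n2 d d' :
      geval_expr e1 s FConv (VNat n1) d -> geval_expr e2 s d (VNat n2) d' ->
      geval_expr (EOp o e1 e2) s FConv (VNat (eval_op o n1 n2)) d'
  | GE_input s v : geval_expr EInput s FConv v FConv
  | GE_div e s v : geval_expr e s FDiv v FDiv.

CoInductive cogeval : cmd -> store -> flag -> store -> flag -> Prop :=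
  | G_skip s : cogeval CSkip s FConv s FConv
  | G_alloc x s : x \notin domf s -> cogeval (CAlloc x) s FConv s.[x <- VNull] FConv
  | G_assign x e s v d : x \in domf s -> geval_expr e s FConv v d ->
      cogeval (CAssign x e) s FConv s.[x <- v] d
  | G_seq c1 c2 s s' s'' d d' :
      cogeval c1 s FConv s' d -> cogeval c2 s' d s'' d' ->
      cogeval (CSeq c1 c2) s FConv s'' d'
  | G_if_true e c1 c2 s s' v d d' :
      v <> VNat 0 -> geval_expr e s FConv v d -> cogeval c1 s d s' d' ->
      cogeval (CIf e c1 c2) s FConv s' d'
  | G_if_false e c1 c2 s s' d d' :
      geval_expr e s FConv (VNat 0) d -> cogeval c2 s d s' d' ->
      cogeval (CIf e c1 c2) s FConv s' d'
  | G_while_true e c s s' s'' v d d' d'' :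
      geval_expr e s FConv v d -> v <> VNat 0 -> cogeval c s d s' d' ->
      cogeval (CWhile e c) s' d' s'' d'' ->
      cogeval (CWhile e c) s FConv s'' d''
  | G_while_false e c s d :
      geval_expr e s FConv (VNat 0) d -> cogeval (CWhile e c) s FConv s d
  | G_div c s s' : cogeval c s FDiv s' FDiv.

(* Main.v *)
Require Import Defs.
From HB Require Import structures.
From mathcomp Require Import all_boot.
From mathcomp Require Import finmap.
From Stdlib Require Import Classical.

Set Implicit Arguments.
Local Open Scope fmap_scope.

Lemma geval_conv e s f v d :
  geval_expr e s f v d -> f = FConv -> d = FConv /\ eval_expr e s v.
Proof.
  induction 1; intros Hf; try discriminate.
  - split; [reflexivity | constructor].
  - split; [reflexivity | constructor].
  - destruct (IHgeval_expr1 Hf) as [-> H1].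
    destruct (IHgeval_expr2 erefl) as [-> H2].
    split; [reflexivity | constructor; assumption].
  - split; [reflexivity | constructor].
Qed.

Lemma eval_geval e s v : eval_expr e s v -> geval_expr e s FConv v FConv.
Proof.
  induction 1.
  - constructor.
  - constructor.
  - econstructor; eassumption.
  - constructor.
Qed.

Ltac gc := repeat match goal with
  | H : geval_expr _ _ FConv _ _ |- _ =>
      let Hd := fresh in let He := fresh in
      destruct (@geval_conv _ _ _ _ _ H erefl) as [Hd He]; subst; clear H
  end.

Lemma progress c s s' d :
  cogeval c s FConv s' d ->
  (c = CSkip /\ s' = s /\ d = FConv) \/
  exists c' s1, step c s c' s1 /\ cogeval c' s1 FConv s' d.
Proof.
  revert s s' d; induction c; intros s s' d H.
  - inversion H; subst. left; auto.
  - inversion H; subst. right. exists CSkip, s.[x <- VNull].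
    split; [constructor; assumption | constructor].
  - inversion H; subst. gc.
    right. exists CSkip, s.[x <- v]. split; [econstructor; eassumption | constructor].
  - inversion H; subst.
    match goal with Hc1 : cogeval c1 _ _ _ _ |- _ =>
      destruct (IHc1 _ _ _ Hc1) as [[-> [-> ->]] | [c' [s1 [Hst Hc]]]] end.
    + right. exists c2, s. split; [constructor | assumption].
    + right. exists (CSeq c' c2), s1. split; [constructor; assumption | econstructor; eassumption].
  - inversion H; subst.
    + gc.
      right. exists c1, s. split; [econstructor; eassumption | assumption].
    + gc.
      right. exists c2, s. split; [econstructor; eassumption | assumption].
  - inversion H; subst.
    + gc.
      right. exists (CSeq c (CWhile e c)), s. split; [econstructor; eassumption|].
      econstructor; eassumption.
    + gc.
      right. exists CSkip, s'. split; [constructor; assumption | constructor].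
Qed.

Lemma back (c : cmd) (s s' : store) : cogeval c s FConv s' FDiv -> diverges c s.
Proof.
  revert c s. cofix CIH. intros c s H.
  destruct (@progress _ _ _ _ H) as [[_ [_ Hd]] | [c' [s1 [Hst Hc]]]].
  - discriminate.
  - exact (Div Hst (CIH _ _ Hc)).
Qed.

Inductive star : cmd -> store -> cmd -> store -> Prop :=
  | star_refl c s : star c s c s
  | star_step c s c' s' c'' s'' : step c s c' s' -> star c' s' c'' s'' -> star c s c'' s''.

Lemma step_cons c s c' s' s'' :
  step c s c' s' -> cogeval c' s' FConv s'' FConv -> cogeval c s FConv s'' FConv.
Proof.
  intros Hst; revert s''; induction Hst; intros s3 Hc.
  - inversion Hc; subst. constructor; assumption.
  - inversion Hc; subst. eapply G_assign; [eassumption| apply eval_geval; eassumption].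
  - inversion Hc; subst.
    match goal with H2 : cogeval c2 _ ?d _ _ |- _ => destruct d; [|inversion H2] end.
    econstructor; [apply IHHst; eassumption | eassumption].
  - econstructor; [constructor | eassumption].
  - econstructor; [eassumption | apply eval_geval; eassumption | eassumption].
  - eapply G_if_false; [apply eval_geval; eassumption | eassumption].
  - inversion Hc; subst.
    match goal with H2 : cogeval (CWhile _ _) _ ?d _ _ |- _ => destruct d; [|inversion H2] end.
    eapply G_while_true; [apply eval_geval; eassumption | eassumption | eassumption | eassumption].
  - inversion Hc; subst. eapply G_while_false. apply eval_geval; eassumption.
Qed.

Lemma star_cog c s s1 : star c s CSkip s1 -> cogeval c s FConv s1 FConv.
Proof.
  intros H; remember CSkip as k; induction H; subst.
  - constructor.
  - eapply step_cons; [eassumption | auto].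
Qed.

Lemma skip_nodiv s : ~ diverges CSkip s.
Proof. intros H. inversion H. inversion H0. Qed.

Lemma seq_inv c1 c2 s : diverges (CSeq c1 c2) s ->
  (c1 = CSkip /\ diverges c2 s) \/
  exists c1' s', step c1 s c1' s' /\ diverges (CSeq c1' c2) s'.
Proof.
  intros H. inversion H as [? ? c' s' Hst Hd]; subst.
  inversion Hst; subst.
  - right; eauto.
  - left; auto.
Qed.

Lemma seq_aux c2 : forall c1 s, diverges (CSeq c1 c2) s ->
  ~ (exists s1, star c1 s CSkip s1 /\ diverges c2 s1) -> diverges c1 s.
Proof.
  cofix CIH. intros c1 s H N.
  destruct (seq_inv H) as [[E Hd] | [c1' [s' [Hst Hd]]]].
  - exfalso. apply N. exists s. subst. split; [constructor | assumption].
  - apply (Div Hst). apply (CIH _ _ Hd).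
    intros [s1 [Hs Hd2]]. apply N. exists s1. split; [econstructor; eassumption | assumption].
Qed.

Lemma if_inv e c1 c2 s : diverges (CIf e c1 c2) s ->
  (exists v, eval_expr e s v /\ v <> VNat 0 /\ diverges c1 s) \/
  (eval_expr e s (VNat 0) /\ diverges c2 s).
Proof.
  intros H. inversion H as [? ? c' s' Hst Hd]; subst.
  inversion Hst; subst; eauto.
Qed.

Lemma while_inv e c s : diverges (CWhile e c) s ->
  exists v, eval_expr e s v /\ v <> VNat 0 /\ diverges (CSeq c (CWhile e c)) s.
Proof.
  intros H. inversion H as [? ? c' s' Hst Hd]; subst.
  inversion Hst; subst; eauto.
  exfalso; exact (skip_nodiv Hd).
Qed.

Lemma atom_nodiv c s : (c = CSkip \/ (exists x, c = CAlloc x) \/ (exists x e, c = CAssign x e)) -> ~ diverges c s.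
Proof.
  intros [->|[[x ->]|[x [e ->]]]] H; [exact (skip_nodiv H)| |];
  inversion H as [? ? ? ? Hst Hd]; subst; inversion Hst; subst; exact (skip_nodiv Hd).
Qed.

Lemma seq_div c1 c2 s : diverges (CSeq c1 c2) s ->
  diverges c1 s \/ exists s1, star c1 s CSkip s1 /\ diverges c2 s1.
Proof.
  intros H. destruct (classic (exists s1, star c1 s CSkip s1 /\ diverges c2 s1)) as [E|N].
  - right; exact E.
  - left; exact (seq_aux H N).
Qed.


Lemma fwd : forall c s, diverges c s -> forall s', cogeval c s FConv s' FDiv.
Proof.
  cofix CIH. intros c s H s'. destruct c.
  - exfalso; exact (atom_nodiv (or_introl erefl) H).
  - exfalso; exact (atom_nodiv (or_intror (or_introl (ex_intro _ _ erefl))) H).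
  - exfalso; exact (atom_nodiv (or_intror (or_intror (ex_intro _ _ (ex_intro _ _ erefl)))) H).
  - destruct (seq_div H) as [H1 | [s1 [Hs Hd]]].
    + apply (G_seq (s' := s') (d := FDiv)); [apply CIH; exact H1 | apply G_div].
    + apply (G_seq (s' := s1) (d := FConv)); [apply star_cog; exact Hs | apply CIH; exact Hd].
  - destruct (if_inv H) as [[v [Hv [Hn Hd]]] | [Hv Hd]].
    + exact (@G_if_true _ _ _ _ _ _ _ _ Hn (eval_geval Hv) (CIH _ _ Hd s')).
    + exact (@G_if_false _ _ _ _ _ _ _ (eval_geval Hv) (CIH _ _ Hd s')).
  - destruct (while_inv H) as [v [Hv [Hn Hd]]].
    destruct (seq_div Hd) as [H1 | [s1 [Hs Hd']]].
    + exact (@G_while_true _ _ _ _ _ _ _ _ _ (eval_geval Hv) Hn (CIH _ _ H1 s) (@G_div _ _ _)).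
    + exact (@G_while_true _ _ _ _ _ _ _ _ _ (eval_geval Hv) Hn (star_cog Hs) (CIH _ _ Hd' s')).
Qed.

Theorem theorem27 (c : cmd) (s : store) :
  diverges c s <-> (forall s' : store, cogeval c s FConv s' FDiv).
Proof.
  split.
  - intros H s'; exact (fwd H s').
  - intros H. exact (back (H [fmap])).
Qed.
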